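(* Let $\mathfrak{g}$ be a finite-dimensional nilpotent Lie algebra, and let $M$ be a finite-dimensional non-trivial irreducible Leibniz $\mathfrak{g}$-bimodule. Then $\mathrm{HL}^n(\mathfrak{g},M)=0$ for every positive integer $n$. Moreover, if $M$ is symmetric, then $\mathrm{HL}^n(\mathfrak{g},M)=0$ for every non-negative integer $n$.
   Context: $\mathfrak{g}$ is regarded as a left Leibniz algebra with $xy=[x,y]$. A Leibniz $\mathfrak{g}$-bimodule is a vector space $M$ with bilinear actions $x\cdot m$, $m\cdot x$ satisfying $(xy)\cdot m=x\cdot(y\cdot m)-y\cdot(x\cdot m)$, $(x\cdot m)\cdot y=x\cdot(m\cdot y)-m\cdot(xy)$, $(m\cdot x)\cdot y=m\cdot(xy)-x\cdot(m\cdot y)$; it is irreducible if nonzero with no sub-bimodules other than $0$ and $M$; non-trivial if the actions are not both zero; symmetric if $m\cdot x=-x\cdot m$. $\mathrm{HL}^n(\mathfrak{g},M)$ is the cohomology of $\mathrm{Hom}(\mathfrak{g}^{\otimes n},M)$ with $(\mathrm{d}^nf)(x_1,\dots,x_{n+1})=\sum_{i=1}^n(-1)^{i+1}x_i\cdot f(\dots,\hat{x}_i,\dots)+(-1)^{n+1}f(x_1,\dots,x_n)\cdot x_{n+1}+\sum_{i<j}(-1)^if(x_1,\dots,\hat{x}_i,\dots,x_ix_j,\dots,x_{n+1})$ ($x_ix_j$ in the $j$-th position). *)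

(* Defs.v *)
From HB Require Import structures.
From mathcomp Require Import all_boot all_order all_algebra.
Set Implicit Arguments. Unset Strict Implicit. Unset Printing Implicit Defensive.
Import GRing.Theory.
Local Open Scope ring_scope.

Section LeibnizDefs.
Variables (F : fieldType) (g M : vectType F).

Definition is_lie_bracket (br : g -> g -> g) : Prop :=
  [/\ (forall a x y z, br (a *: x + y) z = a *: br x z + br y z),
      (forall a x y z, br z (a *: x + y) = a *: br z x + br z y),
      (forall x, br x x = 0) &
      (forall x y z, br x (br y z) + br y (br z x) + br z (br x y) = 0)].

(* lower central series: C 0 = g, C (k+1) = [g, C k] (spanned by brackets
   of basis vectors, which by bilinearity spans all brackets) *)
Fixpoint lcs (br : g -> g -> g) (k : nat) : {vspace g} :=
  match k with
  | 0 => fullv%VS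
  | k'.+1 => <<[seq br x y | x <- (vbasis (fullv : {vspace g}) : seq g),
                             y <- (vbasis (lcs br k') : seq g)]>>%VS
  end.

Definition lie_nilpotent (br : g -> g -> g) : Prop := exists k, lcs br k = 0%VS.

(* Leibniz g-bimodule (g regarded as left Leibniz algebra with xy = [x,y]) *)
Definition is_leibniz_bimodule (br : g -> g -> g)
    (actl : g -> M -> M) (actr : M -> g -> M) : Prop :=
  [/\ (forall a x y m, actl (a *: x + y) m = a *: actl x m + actl y m),
      (forall a x m n, actl x (a *: m + n) = a *: actl x m + actl x n),
      (forall a x y m, actr m (a *: x + y) = a *: actr m x + actr m y) &
      (forall a x m n, actr (a *: m + n) x = a *: actr m x + actr n x)] /\
  [/\ (forall x y m, actl (br x y) m = actl x (actl y m) - actl y (actl x m)),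
      (forall x y m, actr (actl x m) y = actl x (actr m y) - actr m (br x y)) &
      (forall x y m, actr (actr m x) y = actr m (br x y) - actl x (actr m y))].

Definition is_sub_bimodule (actl : g -> M -> M) (actr : M -> g -> M)
    (U : {vspace M}) : Prop :=
  forall x m, m \in U -> actl x m \in U /\ actr m x \in U.

Definition irreducible_bimodule (actl : g -> M -> M) (actr : M -> g -> M) : Prop :=
  (fullv : {vspace M}) != 0%VS /\
  forall U : {vspace M}, is_sub_bimodule actl actr U -> U = 0%VS \/ U = fullv.

Definition nontrivial_bimodule (actl : g -> M -> M) (actr : M -> g -> M) : Prop :=
  ~ ((forall x m, actl x m = 0) /\ (forall x m, actr m x = 0)).

Definition symmetric_bimodule (actl : g -> M -> M) (actr : M -> g -> M) : Prop :=
  forall x m, actr m x = - actl x m.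

(* n-cochains: multilinear maps g^n -> M, i.e. Hom(g^{(x)n}, M) *)
Definition cochain (n : nat) := {ffun 'I_n -> g} -> M.

Definition upd n (v : {ffun 'I_n -> g}) (i : 'I_n) (x : g) : {ffun 'I_n -> g} :=
  [ffun j => if j == i then x else v j].

Definition multilinear n (f : cochain n) : Prop :=
  forall (v : {ffun 'I_n -> g}) (i : 'I_n) (a : F) (x y : g),
    f (upd v i (a *: x + y)) = a *: f (upd v i x) + f (upd v i y).

Definition del_at n (x : {ffun 'I_n.+1 -> g}) (i : 'I_n.+1) : {ffun 'I_n -> g} :=
  [ffun k => x (lift i k)].

Definition init_of n (x : {ffun 'I_n.+1 -> g}) : {ffun 'I_n -> g} :=
  [ffun k => x (widen_ord (leqnSn n) k)].

(* (x_1,...,hat x_i,..., x_i x_j (in the j-th position),...,x_{n+1}) *)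
Definition brk_at (br : g -> g -> g) n (x : {ffun 'I_n.+1 -> g}) (i j : 'I_n.+1)
  : {ffun 'I_n -> g} :=
  [ffun k => if lift i k == j then br (x i) (x j) else x (lift i k)].

(* Leibniz coboundary d^n; indices are 0-based: position i (0-based) is
   x_{i+1} in the paper, so the paper's signs (-1)^{i+1} resp. (-1)^i become
   (-1)^i resp. (-1)^{i+1}. *)
Definition dL (br : g -> g -> g) (actl : g -> M -> M) (actr : M -> g -> M)
    n (f : cochain n) : cochain n.+1 :=
  fun x =>
    \sum_(i < n.+1 | (i < n)%N) (-1) ^+ i *: actl (x i) (f (del_at x i))
    + (-1) ^+ n.+1 *: actr (f (init_of x)) (x ord_max)
    + \sum_(i < n.+1) \sum_(j < n.+1 | (i < j)%N)
        (-1) ^+ i.+1 *: f (brk_at br x i j).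

Definition is_cocycle br actl actr n (f : cochain n) : Prop :=
  forall x, dL br actl actr f x = 0.

Definition HL_vanishes br actl actr (n : nat) : Prop :=
  match n with
  | 0 => forall f : cochain 0, multilinear f -> is_cocycle br actl actr f ->
           forall x, f x = 0
  | n'.+1 => forall f : cochain n'.+1, multilinear f ->
           is_cocycle br actl actr f ->
           exists h : cochain n', multilinear h /\
             forall x, dL br actl actr h x = f x
  end.

End LeibnizDefs.

(* Main.v *)
Require Import Defs.
From HB Require Import structures.
From mathcomp Require Import all_boot all_order all_algebra.
From Stdlib Require Import Classical.
Set Implicit Arguments. Unset Strict Implicit. Unset Printing Implicit Defensive.
Import GRing.Theory.
Local Open Scope ring_scope.

Section Lin.
Variables (F : fieldType) (U V : lmodType F) (f : U -> V) (Hf : linear f).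
Let fL : {linear U -> V} := HB.pack f (GRing.isLinear.Build F U V *:%R f Hf).
Lemma lin0 : f 0 = 0. Proof. exact: (linear0 fL). Qed.
Lemma linD x y : f (x + y) = f x + f y. Proof. exact: (linearD fL). Qed.
Lemma linZ a x : f (a *: x) = a *: f x. Proof. exact: (linearZZ fL). Qed.
Lemma linN x : f (- x) = - f x. Proof. exact: (linearN fL). Qed.
Lemma linB x y : f (x - y) = f x - f y. Proof. exact: (linearB fL). Qed.
Lemma lin_sum I r (P : pred I) (G : I -> U) :
  f (\sum_(i <- r | P i) G i) = \sum_(i <- r | P i) f (G i).
Proof. exact: (linear_sum fL). Qed.
End Lin.

HB.lock Definition ins (F : fieldType) (g : vectType F) n (z : g)
  (x : {ffun 'I_n -> g}) : {ffun 'I_n.+1 -> g} :=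
  [ffun k => if unlift ord0 k is Some k' then x k' else z].

Section Ord.
Variables (F : fieldType) (g : vectType F).
Lemma ins0 n z (x : {ffun 'I_n -> g}) : ins z x ord0 = z.
Proof. by rewrite ins.unlock ffunE unlift_none. Qed.
Lemma insS n z (x : {ffun 'I_n -> g}) k : ins z x (lift ord0 k) = x k.
Proof. by rewrite ins.unlock ffunE liftK. Qed.
Lemma del_ins0 n z (x : {ffun 'I_n -> g}) : del_at (ins z x) ord0 = x.
Proof. by apply/ffunP=> k; rewrite !ffunE insS. Qed.
Lemma lift_lift0 n (i : 'I_n.+1) (k : 'I_n) :
  lift (lift ord0 i) (lift ord0 k) = lift ord0 (lift i k).
Proof. by apply: val_inj; rewrite /= /bump !leq0n !add1n ltnS addnS. Qed.
Lemma lift_ord0 n (i : 'I_n.+1) : lift (lift ord0 i) ord0 = ord0 :> 'I_n.+2.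
Proof. exact: val_inj. Qed.
Lemma del_insS n z (x : {ffun 'I_n.+1 -> g}) i :
  del_at (ins z x) (lift ord0 i) = ins z (del_at x i).
Proof.
apply/ffunP=> k; rewrite !ffunE; case: (unliftP ord0 k) => [k'|] ->.
  by rewrite lift_lift0 !insS ffunE.
by rewrite lift_ord0 !ins0.
Qed.
Lemma init_ins n z (x : {ffun 'I_n.+1 -> g}) :
  init_of (ins z x) = ins z (init_of x).
Proof.
apply/ffunP=> k; rewrite !ffunE; case: (unliftP ord0 k) => [k'|] ->.
  have -> : widen_ord (leqnSn n.+1) (lift ord0 k') = lift ord0 (widen_ord (leqnSn n) k').
    exact: val_inj.
  by rewrite !insS ffunE.
have -> : widen_ord (leqnSn n.+1) ord0 = ord0 by exact: val_inj.
by rewrite !ins0.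
Qed.
Lemma ins_max n z (x : {ffun 'I_n.+1 -> g}) : ins z x ord_max = x ord_max.
Proof.
have -> : (ord_max : 'I_n.+2) = lift ord0 ord_max by exact: val_inj.
by rewrite insS.
Qed.
Lemma brk_ins0 (br : g -> g -> g) n z (x : {ffun 'I_n.+1 -> g}) j :
  brk_at br (ins z x) ord0 (lift ord0 j) = upd x j (br z (x j)).
Proof.
apply/ffunP=> k; rewrite !ffunE (inj_eq (@lift_inj _ ord0)) ins0 !insS.
by case: eqP => // ->.
Qed.
Lemma brk_insS (br : g -> g -> g) n z (x : {ffun 'I_n.+1 -> g}) i j :
  brk_at br (ins z x) (lift ord0 i) (lift ord0 j) = ins z (brk_at br x i j).
Proof.
apply/ffunP=> k; rewrite !ffunE; case: (unliftP ord0 k) => [k'|] ->.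
  by rewrite lift_lift0 (inj_eq (@lift_inj _ ord0)) !insS ffunE.
rewrite lift_ord0 !ins0.
by case: eqP => // /(congr1 val); rewrite /= lift0.
Qed.
End Ord.

Definition iz (F : fieldType) (g M : vectType F) n (z : g) (f : cochain g M n.+1)
  : cochain g M n := fun x => f (ins z x).
Definition Nz (F : fieldType) (g M : vectType F) (br : g -> g -> g) n (z : g)
  (f : cochain g M n) : cochain g M n :=
  fun x => \sum_(k < n) f (upd x k (br z (x k))).

Lemma expSN (F : fieldType) i : (-1) ^+ i.+1 = - ((-1) ^+ i) :> F.
Proof. by rewrite exprS mulN1r. Qed.
Lemma bump0n i : bump 0 i = i.+1.
Proof. by rewrite /bump leq0n. Qed.

Lemma zm (V : zmodType) (a b c l m : V) :
  a + b + c + (l - a + - b + (- m - c)) = l - m.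
Proof.
by rewrite addrACA [c + _]addrCA subrr addr0 addrACA [a + _]addrCA !subrr !addr0.
Qed.

Section Cartan.
Variables (F : fieldType) (g M : vectType F) (br : g -> g -> g)
  (actl : g -> M -> M) (actr : M -> g -> M) (z : g).

Lemma cartan n (f : cochain g M n.+1) (x : {ffun 'I_n.+1 -> g}) :
  dL br actl actr (iz z f) x + dL br actl actr f (ins z x) =
  actl z (f x) - Nz br z f x.
Proof.
rewrite /dL /iz /Nz.
set A1 := \sum_(i < n.+1 | (i < n)%N) (-1) ^+ i *: actl (x i) (f (ins z (del_at x i))).
set C1 := \sum_(i < n.+1) \sum_(j < n.+1 | (i < j)%N) (-1) ^+ i.+1 *: f (ins z (brk_at br x i j)).
set N := \sum_(k < n.+1) f (upd x k (br z (x k))).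
have eA : \sum_(i < n.+2 | (i < n.+1)%N) (-1) ^+ i *: actl (ins z x i) (f (del_at (ins z x) i))
    = actl z (f x) - A1.
  rewrite big_mkcond big_ord_recl /= ins0 del_ins0 expr0 scale1r.
  congr (_ + _); rewrite /A1 -sumrN [RHS]big_mkcond; apply: eq_bigr => i _.
  rewrite bump0n ltnS; case: ifP => _ //.
  by rewrite insS del_insS expSN scaleNr.
have eC : \sum_(i < n.+2) \sum_(j < n.+2 | (i < j)%N)
      (-1) ^+ i.+1 *: f (brk_at br (ins z x) i j)
    = - N - C1.
  rewrite big_ord_recl; congr (_ + _).
    rewrite big_mkcond big_ord_recl /= add0r /N -sumrN.
    apply: eq_bigr => j _.
    by rewrite brk_ins0 expr1 scaleN1r.
  rewrite /C1 -sumrN; apply: eq_bigr => i _.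
  rewrite big_mkcond big_ord_recl /= add0r -sumrN.
  rewrite [RHS]big_mkcond; apply: eq_bigr => j _.
  rewrite !bump0n ltnS; case: ifP => _ //.
  by rewrite brk_insS expSN scaleNr.
rewrite eA eC init_ins ins_max (expSN _ n.+1) scaleNr.
exact: zm.
Qed.
End Cartan.

Section Ord2.
Variables (F : fieldType) (g : vectType F).
Lemma upd_same n (v : {ffun 'I_n -> g}) i x : upd v i x i = x.
Proof. by rewrite ffunE eqxx. Qed.
Lemma upd_other n (v : {ffun 'I_n -> g}) i j x : j != i -> upd v i x j = v j.
Proof. by rewrite ffunE => /negbTE ->. Qed.
Lemma upd_id n (v : {ffun 'I_n -> g}) i : upd v i (v i) = v.
Proof. by apply/ffunP=> j; rewrite ffunE; case: eqP => // ->. Qed.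
Lemma del_upd_lift n (x : {ffun 'I_n.+1 -> g}) i k v :
  del_at (upd x (lift i k) v) i = upd (del_at x i) k v.
Proof. by apply/ffunP=> p; rewrite !ffunE (inj_eq (@lift_inj _ i)). Qed.
Lemma init_upd_widen n (x : {ffun 'I_n.+1 -> g}) k v :
  init_of (upd x (widen_ord (leqnSn n) k) v) = upd (init_of x) k v.
Proof.
apply/ffunP=> p; rewrite !ffunE.
have -> : (widen_ord (leqnSn n) p == widen_ord (leqnSn n) k) = (p == k) by [].
by [].
Qed.
Lemma upd_max_widen n (x : {ffun 'I_n.+1 -> g}) k v :
  upd x (widen_ord (leqnSn n) k) v ord_max = x ord_max.
Proof.
rewrite upd_other //; apply/eqP => /(congr1 val) /= E.
by move: (ltn_ord k); rewrite -E ltnn.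
Qed.
End Ord2.

Section NzComm.
Variables (F : fieldType) (g M : vectType F) (br : g -> g -> g)
  (actl : g -> M -> M) (actr : M -> g -> M) (z : g).
Hypothesis Hjac : forall a b, br z (br a b) = br (br z a) b + br a (br z b).
Hypothesis HLlin : forall x, linear (actl x).
Hypothesis HRlin : forall x, linear (actr ^~ x).
Hypothesis HJl : forall w m, actl (br z w) m = 0.
Hypothesis HJr : forall w m, actr m (br z w) = 0.

Lemma mlD n (f : cochain g M n) (Hf : multilinear f) v i x y :
  f (upd v i (x + y)) = f (upd v i x) + f (upd v i y).
Proof. by have := Hf v i 1 x y; rewrite !scale1r. Qed.

Lemma Nz_dL n (f : cochain g M n) (Hf : multilinear f) x :
  dL br actl actr (Nz br z f) x = Nz br z (dL br actl actr f) x.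
Proof.
rewrite /dL /Nz [RHS]big_split /= [X in _ = X + _]big_split /=.
congr (_ + _ + _).
- rewrite exchange_big /=; apply: eq_bigr => i lin.
  rewrite (bigD1_ord i) //= upd_same HJl scaler0 add0r.
  rewrite lin_sum // scaler_sumr; apply: eq_bigr => k _.
  by rewrite upd_other ?neq_lift // del_upd_lift ffunE.
- rewrite big_ord_recr /= upd_same HJr scaler0 addr0.
  rewrite (lin_sum (HRlin _)) scaler_sumr; apply: eq_bigr => k _.
  by rewrite upd_max_widen init_upd_widen ffunE.
rewrite exchange_big /=; apply: eq_bigr => i _.
rewrite exchange_big /=; apply: eq_bigr => j lij.
rewrite -scaler_sumr; congr (_ *: _).
have nij : i != j by rewrite neq_ltn lij.
have [k0 ej] : exists k0 : 'I_n, j = lift i k0.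
  by case: (unlift_some nij) => k e _; exists k.
subst j.
set B := brk_at br x i (lift i k0).
rewrite [RHS](bigD1_ord i) //= [X in _ = _ + X](bigD1 k0) //= [LHS](bigD1 k0) //= addrA.
congr (_ + _).
  have eB : B k0 = br (x i) (x (lift i k0)) by rewrite /B ffunE eqxx.
  rewrite eB Hjac mlD //.
  congr (_ + _); congr (f _); apply/ffunP=> p; rewrite !ffunE.
  - rewrite !(inj_eq (@lift_inj _ i)) eqxx [lift i k0 == i]eq_sym (negbTE (neq_lift _ _)).
    by case: eqP => // _; rewrite [lift i p == i]eq_sym (negbTE (neq_lift _ _)).
  - rewrite !(inj_eq (@lift_inj _ i)) eqxx (negbTE (neq_lift _ _)).
    by case: eqP.
apply: eq_bigr => k nk.
congr (f _); apply/ffunP=> p; rewrite !ffunE !(inj_eq (@lift_inj _ i)).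
rewrite (negbTE nk) [k0 == k]eq_sym (negbTE nk) (negbTE (neq_lift _ _)).
case: (eqVneq p k) => [->|npk] //; first by rewrite (negbTE nk).

Qed.
End NzComm.

Section Ord3.
Variables (F : fieldType) (g : vectType F).
Lemma ins_upd n (z : g) (v : {ffun 'I_n -> g}) i y :
  ins z (upd v i y) = upd (ins z v) (lift ord0 i) y.
Proof.
apply/ffunP=> k; rewrite [RHS]ffunE; case: (unliftP ord0 k) => [k'|] ->.
  by rewrite !insS ffunE (inj_eq (@lift_inj _ ord0)).
by rewrite !ins0 (negbTE (neq_lift _ _)).
Qed.
Lemma upd_upd_same n (v : {ffun 'I_n -> g}) i a b : upd (upd v i a) i b = upd v i b.
Proof. by apply/ffunP=> k; rewrite !ffunE; case: eqP. Qed.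
Lemma upd_upd_comm n (v : {ffun 'I_n -> g}) i k a b : k != i ->
  upd (upd v i a) k b = upd (upd v k b) i a.
Proof.
move=> nki; apply/ffunP=> p; rewrite !ffunE.
case: (eqVneq p k) => [->|]; last by [].
by rewrite (negbTE nki).
Qed.
End Ord3.

Section Homotopy.
Variables (F : fieldType) (g M : vectType F) (br : g -> g -> g)
  (actl : g -> M -> M) (actr : M -> g -> M) (z : g) (T : M -> M) (K : nat).
Hypothesis Hbr2 : forall w, linear (br w).
Hypothesis Hjac : forall a b, br z (br a b) = br (br z a) b + br a (br z b).
Hypothesis HLlin : forall x, linear (actl x).
Hypothesis HRlin : forall x, linear (actr ^~ x).
Hypothesis HJl : forall w m, actl (br z w) m = 0.
Hypothesis HJr : forall w m, actr m (br z w) = 0.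
Hypothesis HTlin : linear T.
Hypothesis HzT : forall m, actl z (T m) = m.
Hypothesis HTL : forall x m, T (actl x m) = actl x (T m).
Hypothesis HTR : forall x m, T (actr m x) = actr (T m) x.
Hypothesis Hlcs : forall k y, y \in lcs br k -> br z y \in lcs br k.+1.
Hypothesis Hnil : forall m y, (K <= m)%N -> y \in lcs br m -> y = 0.

Local Notation d := (dL br actl actr).

Definition wP n (f : cochain g M n) D := forall (x : {ffun 'I_n -> g}) (w : 'I_n -> nat),
  (forall i, x i \in lcs br (w i)) -> (D <= \sum_i w i)%N -> f x = 0.

Lemma ml0 n (f : cochain g M n) (Hf : multilinear f) v i : f (upd v i 0) = 0.
Proof.
have := Hf v i (-1) (v i) (v i).
by rewrite scaleN1r addNr scaleN1r addNr.
Qed.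

Lemma wP_top n (f : cochain g M n.+1) : multilinear f -> wP f (n.+1 * K).
Proof.
move=> Hf x w Hx Hs.
case: (boolP [exists i, K <= w i]%N) => [/existsP [i Ki]|].
  by rewrite -(upd_id x i) (Hnil Ki (Hx i)) ml0.
rewrite negb_exists => /forallP Hw.
have : (\sum_(i < n.+1) (w i).+1 <= \sum_(i < n.+1) K)%N.
  by apply: leq_sum => i _; rewrite ltnNge Hw.
rewrite sum_nat_const card_ord -[X in (X <= _)%N]addn0.
under eq_bigr do rewrite -addn1.
rewrite big_split /= sum_nat_const card_ord muln1 mulnC addn0 => H.
move: Hs; rewrite mulnC => Hs.
have := leq_trans H Hs; rewrite -{2}[\sum_i w i]addn0 leq_add2l.
by [].
Qed.

Lemma wP0 n (f : cochain g M n) : wP f 0 -> forall x, f x = 0.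
Proof. by move=> H x; apply: (H x (fun _ => 0%N)) => // i; exact: memvf. Qed.

Lemma wP_T n (f : cochain g M n) D : wP f D -> wP (fun x => T (f x)) D.
Proof. by move=> H x w Hx Hs; rewrite (H x w Hx Hs) (lin0 HTlin). Qed.

Lemma wP_N n (f : cochain g M n) D : wP f D.+1 -> wP (Nz br z f) D.
Proof.
move=> H x w Hx Hs; rewrite /Nz big1 // => k _.
apply: (H _ (fun i => w i + (i == k))%N).
  move=> i; rewrite ffunE; case: eqP => [->|_].
    by rewrite addn1; apply: Hlcs.
  by rewrite addn0.
have E : (\sum_(i < n) (i == k) = 1)%N.
  rewrite (bigD1 k) //= eqxx big1 // => i /negbTE -> //.
rewrite big_split /= E addn1 ltnS; exact: Hs.
Qed.

Lemma ml_T n (f : cochain g M n) : multilinear f -> multilinear (fun x => T (f x)).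
Proof. by move=> Hf v i a x y; rewrite Hf HTlin. Qed.

Lemma ml_iz n (f : cochain g M n.+1) : multilinear f -> multilinear (iz z f).
Proof. by move=> Hf v i a x y; rewrite /iz !ins_upd Hf. Qed.

Lemma ml_N n (f : cochain g M n) : multilinear f -> multilinear (Nz br z f).
Proof.
move=> Hf v i a x y; rewrite /Nz scaler_sumr -big_split /=; apply: eq_bigr => k _.
case: (eqVneq k i) => [->|nki].
  by rewrite !upd_same !upd_upd_same (Hbr2 z a x y) Hf.
by rewrite !upd_other // !(fun w c e => @upd_upd_comm F g n w i k c e nki) Hf.
Qed.

Lemma ml_add n (f1 f2 : cochain g M n) : multilinear f1 -> multilinear f2 ->
  multilinear (fun x => f1 x + f2 x).
Proof.
by move=> H1 H2 v i a x y; rewrite H1 H2 scalerDr addrACA.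
Qed.

Lemma ml_zero n : multilinear (fun _ : {ffun 'I_n -> g} => 0 : M).
Proof. by move=> v i a x y; rewrite scaler0 addr0. Qed.

Lemma dL_T n (f : cochain g M n) x : d (fun y => T (f y)) x = T (d f x).
Proof.
rewrite /dL !(linD HTlin) !(lin_sum HTlin) !(linZ HTlin) HTR; congr (_ + _ + _).
  by apply: eq_bigr => i _; rewrite (linZ HTlin) HTL.
apply: eq_bigr => i _; rewrite (lin_sum HTlin); apply: eq_bigr => j _.
by rewrite (linZ HTlin).
Qed.

Lemma dL_add n (f1 f2 : cochain g M n) x :
  d (fun y => f1 y + f2 y) x = d f1 x + d f2 x.
Proof.
rewrite /dL (linD (HRlin _)) scalerDr.
have -> : forall a b c a' b' c' : M, a + b + c + (a' + b' + c') = (a + a') + (b + b') + (c + c').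
  by move=> a b c a' b' c'; rewrite addrACA [a + b + _]addrACA.
congr (_ + _ + _).
  by rewrite -big_split; apply: eq_bigr => i _; rewrite (linD (HLlin _)) scalerDr.
rewrite -big_split; apply: eq_bigr => i _; rewrite -big_split; apply: eq_bigr => j _.
by rewrite scalerDr.
Qed.

Lemma dL_zero n x : d (fun _ : {ffun 'I_n -> g} => 0 : M) x = 0.
Proof.
rewrite /dL (lin0 (HRlin _)) scaler0 addr0 big1 ?add0r; last first.
  by move=> i _; rewrite (lin0 (HLlin _)) scaler0.
by rewrite big1 // => i _; rewrite big1 // => j _; rewrite scaler0.
Qed.

Lemma main_ind n D : forall f : cochain g M n.+1, multilinear f ->
  (forall x, d f x = 0) -> wP f D ->
  exists h : cochain g M n, multilinear h /\ forall x, d h x = f x.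
Proof.
elim: D => [|D IH] f Hf Hc HD.
  exists (fun _ => 0); split; first exact: ml_zero.
  by move=> x; rewrite dL_zero (wP0 HD).
set g0 := fun x => T (f x).
have Hg0 : multilinear g0 by exact: ml_T.
have Cg0 : forall x, d g0 x = 0 by move=> x; rewrite dL_T Hc (lin0 HTlin).
have [h' [Hh' Eh']] : exists h : cochain g M n, multilinear h /\
    forall x, d h x = Nz br z g0 x.
  apply: IH; first exact: ml_N.
    move=> x; rewrite Nz_dL //; rewrite /Nz big1 // => k _; exact: Cg0.
  exact/wP_N/wP_T.
exists (fun x => iz z g0 x + h' x); split.
  by apply: ml_add => //; apply: ml_iz.
move=> x; rewrite dL_add Eh'.
have := cartan br actl actr z g0 x; rewrite Cg0 addr0 => ->.
by rewrite /g0 HzT subrK.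
Qed.

End Homotopy.
Section Lie.
Variables (F : fieldType) (g : vectType F) (br : g -> g -> g).
Hypothesis Hlie : is_lie_bracket br.

Lemma br_l w : linear (br ^~ w). Proof. by case: Hlie => H _ _ _ a x y; exact: H. Qed.
Lemma br_r w : linear (br w). Proof. by case: Hlie => _ H _ _ a x y; exact: H. Qed.

Lemma brDl x y w : br (x + y) w = br x w + br y w. Proof. exact: (linD (br_l w)). Qed.
Lemma brDr w x y : br w (x + y) = br w x + br w y. Proof. exact: (linD (br_r w)). Qed.
Lemma brZl a x w : br (a *: x) w = a *: br x w. Proof. exact: (linZ (br_l w)). Qed.
Lemma brZr w a x : br w (a *: x) = a *: br w x. Proof. exact: (linZ (br_r w)). Qed.
Lemma brNl x w : br (- x) w = - br x w. Proof. exact: (linN (br_l w)). Qed.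
Lemma brNr w x : br w (- x) = - br w x. Proof. exact: (linN (br_r w)). Qed.
Lemma br_suml I r (P : pred I) (G : I -> g) w :
  br (\sum_(i <- r | P i) G i) w = \sum_(i <- r | P i) br (G i) w.
Proof. exact: (lin_sum (br_l w)). Qed.
Lemma br_sumr I r (P : pred I) (G : I -> g) w :
  br w (\sum_(i <- r | P i) G i) = \sum_(i <- r | P i) br w (G i).
Proof. exact: (lin_sum (br_r w)). Qed.

Lemma br_anti x y : br y x = - br x y.
Proof.
case: Hlie => _ _ Hxx _.
have := Hxx (x + y).
rewrite brDl !brDr !Hxx add0r addr0 => /eqP.
by rewrite addrC addr_eq0 => /eqP.
Qed.

Lemma br_jac z a b : br z (br a b) = br (br z a) b + br a (br z b).
Proof.
case: Hlie => _ _ _ Hj.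
have := Hj z a b.
rewrite [br b z]br_anti brNr [br b (br z a)]br_anti.
by move/eqP; rewrite -addrA -opprD subr_eq0 => /eqP ->; rewrite addrC.
Qed.

Lemma lcs_br k x y : y \in lcs br k -> br x y \in lcs br k.+1.
Proof.
move=> Hy /=.
rewrite (coord_vbasis (memvf x)) (coord_vbasis Hy).
rewrite br_suml; apply: rpred_sum => i _.
rewrite brZl; apply: rpredZ.
rewrite br_sumr; apply: rpred_sum => j _.
rewrite brZr; apply: rpredZ.
apply: memv_span; apply: allpairs_f; apply: mem_nth; by rewrite size_tuple.
Qed.

Lemma lcs_up K : lcs br K = 0%VS -> forall m, (K <= m)%N -> lcs br m = 0%VS.
Proof.
move=> HK m; elim: m => [|m IH]; first by rewrite leqn0 => /eqP <-.
rewrite leq_eqVlt => /orP [/eqP <- //|]; rewrite ltnS => /IH Hm /=.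
rewrite Hm.
suff -> : [seq br x y | x <- (vbasis (fullv : {vspace g}) : seq g), y <- (vbasis (0%VS : {vspace g}) : seq g)] = [::] by rewrite span_nil.
apply/eqP; rewrite -size_eq0 size_allpairs.
have -> : size (vbasis (0%VS : {vspace g})) = 0%N by rewrite size_tuple dimv0.
by rewrite muln0.
Qed.
End Lie.

Section KerV.
Variables (F : fieldType) (U V : vectType F) (f : U -> V) (Hf : linear f).
Definition kerv : {vspace U} :=
  lker (linfun (HB.pack f (GRing.isLinear.Build F U V *:%R f Hf) : {linear U -> V})).
Lemma mem_kerv u : (u \in kerv) = (f u == 0).
Proof. by rewrite memv_ker lfunE. Qed.
End KerV.

Lemma exists_switch (P : nat -> Prop) K : P 0%N -> ~ P K -> exists k, P k /\ ~ P k.+1.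
Proof.
elim: K => [//|K IH] P0 nPK.
case: (classic (P K)) => [PK|nPK']; first by exists K.
exact: IH.
Qed.

Section Main.
Variables (F : fieldType) (g M : vectType F) (br : g -> g -> g)
  (actl : g -> M -> M) (actr : M -> g -> M).
Hypotheses (Hlie : is_lie_bracket br) (Hnil : lie_nilpotent br)
  (Hbim : is_leibniz_bimodule br actl actr)
  (Hirr : irreducible_bimodule actl actr) (Hnt : nontrivial_bimodule actl actr).

Lemma aLr x : linear (actl x). Proof. by case: Hbim => [[_ H _ _] _] a u v; exact: H. Qed.
Lemma aLl m : linear (actl ^~ m). Proof. by case: Hbim => [[H _ _ _] _] a u v; exact: H. Qed.
Lemma aRr m : linear (actr m). Proof. by case: Hbim => [[_ _ H _] _] a u v; exact: H. Qed.
Lemma aRl x : linear (actr ^~ x). Proof. by case: Hbim => [[_ _ _ H] _] a u v; exact: H. Qed.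
Lemma B1 x y m : actl (br x y) m = actl x (actl y m) - actl y (actl x m).
Proof. by case: Hbim => _ [H _ _]; exact: H. Qed.
Lemma B2 x y m : actr (actl x m) y = actl x (actr m y) - actr m (br x y).
Proof. by case: Hbim => _ [_ H _]; exact: H. Qed.
Lemma B3 x y m : actr (actr m x) y = actr m (br x y) - actl x (actr m y).
Proof. by case: Hbim => _ [_ _ H]; exact: H. Qed.

Lemma aL0r x : actl x 0 = 0. Proof. exact: (lin0 (aLr x)). Qed.
Lemma aL0l m : actl 0 m = 0. Proof. exact: (lin0 (aLl m)). Qed.
Lemma aLNl x m : actl (- x) m = - actl x m. Proof. exact: (linN (aLl m)). Qed.
Lemma aR0l x : actr 0 x = 0. Proof. exact: (lin0 (aRl x)). Qed.
Lemma aR0r m : actr m 0 = 0. Proof. exact: (lin0 (aRr m)). Qed.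
Lemma aRDl m n x : actr (m + n) x = actr m x + actr n x. Proof. exact: (linD (aRl x)). Qed.
Lemma aR_sumr m I r (P : pred I) (G : I -> g) :
  actr m (\sum_(i <- r | P i) G i) = \sum_(i <- r | P i) actr m (G i).
Proof. exact: (lin_sum (aRr m)). Qed.
Lemma aRZr m a x : actr m (a *: x) = a *: actr m x. Proof. exact: (linZ (aRr m)). Qed.

Lemma dich : (forall x m, actr m x = 0) \/ (forall x m, actr m x = - actl x m).
Proof.
pose d := \dim (fullv : {vspace g}).
pose b := vbasis (fullv : {vspace g}).
pose phi := fun m : M => [ffun i : 'I_d => actr m b`_i].
have Hphi : linear phi.
  by move=> a m n; apply/ffunP => i; rewrite !ffunE (aRl _).
have memK : forall m, (m \in kerv Hphi) <-> (forall y, actr m y = 0).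
  move=> m; rewrite mem_kerv; split.
    move=> /eqP H y; rewrite (coord_vbasis (memvf y)) aR_sumr big1 // => i _.
    by rewrite aRZr; move/ffunP: H => /(_ i); rewrite !ffunE => ->; rewrite scaler0.
  by move=> H; apply/eqP/ffunP => i; rewrite !ffunE H.
have sub : is_sub_bimodule actl actr (kerv Hphi).
  move=> x m /memK Hm; split; apply/memK => y.
    by rewrite B2 Hm Hm aL0r subr0.
  by rewrite B3 Hm Hm aL0r subr0.
case: Hirr => _ /(_ _ sub) [K0|Kf].
  right => x m; apply/eqP; rewrite -addr_eq0; apply/eqP.
  have : actl x m + actr m x \in kerv Hphi.
    by apply/memK => y; rewrite aRDl B2 B3 addrC addrA subrK subrr.
  by rewrite K0 memv0 => /eqP; rewrite addrC.
left => x m; have : m \in kerv Hphi by rewrite Kf memvf.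
by move/memK.
Qed.

Lemma final_sec :
  (forall n : nat, (0 < n)%N -> HL_vanishes br actl actr n) /\
  (symmetric_bimodule actl actr -> forall n : nat, HL_vanishes br actl actr n).
Proof.
have C1 : forall w, (forall m, actl w m = 0) -> forall m, actr m w = 0.
  move=> w Hw m; case: dich => H; first exact: H.
  by rewrite H Hw oppr0.
have Lnz : exists x m, actl x m != 0.
  apply: NNPP => H; apply: Hnt; split.
    move=> x m; apply/eqP; apply: contraT => Hx; exfalso; apply: H; by exists x, m.
  move=> x m; apply: C1 => m'; apply/eqP; apply: contraT => Hx; exfalso; apply: H; by exists x, m'.
case: Hnil => K HK.
pose P := fun k => exists z, z \in lcs br k /\ exists m, actl z m != 0.
have P0 : P 0%N by case: Lnz => x [m Hm]; exists x; split; [exact: memvf | by exists m].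
have nPK : ~ P K.
  case=> z [Hz [m Hm]]; move: Hz; rewrite HK memv0 => /eqP Ez.
  by move: Hm; rewrite Ez aL0l eqxx.
case: (exists_switch P0 nPK) => k [[z [Hz [m0 Hm0]]] nP].
have HJ0 : forall w, w \in lcs br k.+1 -> forall m, actl w m = 0.
  move=> w Hw m; apply/eqP; apply: contraT => Hm; exfalso; apply: nP; exists w; split => //.
  by exists m.
have HJl : forall w m, actl (br z w) m = 0.
  by move=> w m; rewrite (br_anti Hlie) aLNl HJ0 ?oppr0 // (lcs_br Hlie).
have HJr : forall w m, actr m (br z w) = 0 by move=> w; apply: C1 => m; exact: HJl.
have Z1 : forall x m, actl x (actl z m) = actl z (actl x m).
  move=> x m; apply/eqP; rewrite -subr_eq0 -B1 HJ0 // (lcs_br Hlie) //.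
have Z2 : forall x m, actr (actl z m) x = actl z (actr m x).
  by move=> x m; rewrite B2 HJr subr0.
have sub : is_sub_bimodule actl actr (kerv (aLr z)).
  move=> x m; rewrite !mem_kerv => /eqP Hm; split; apply/eqP.
    by rewrite -Z1 Hm aL0r.
  by rewrite -Z2 Hm aR0l.
have KL0 : kerv (aLr z) = 0%VS.
  case: Hirr => _ /(_ _ sub) [//|Kf].
  by move: (memvf m0); rewrite -Kf mem_kerv (negbTE Hm0).
have Hinj : forall m, actl z m = 0 -> m = 0.
  move=> m Hm; have : m \in kerv (aLr z) by rewrite mem_kerv Hm.
  by rewrite KL0 memv0 => /eqP.
pose f := linfun (HB.pack (actl z) (GRing.isLinear.Build F M M *:%R (actl z) (aLr z))
   : {linear M -> M}).
have kf0 : lker f == 0%VS by rewrite -KL0.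
pose T := fun m => (f^-1)%VF m.
have HTlin : linear T by move=> a u v; rewrite /T linearP.
have HzT : forall m, actl z (T m) = m.
  move=> m; have := lker0_lfunVK kf0 m; by rewrite lfunE.
have HTL : forall x m, T (actl x m) = actl x (T m).
  move=> x m; apply/eqP; rewrite -subr_eq0; apply/eqP; apply: Hinj.
  by rewrite (linB (aLr z)) HzT -Z1 HzT subrr.
have HTR : forall x m, T (actr m x) = actr (T m) x.
  move=> x m; apply/eqP; rewrite -subr_eq0; apply/eqP; apply: Hinj.
  by rewrite (linB (aLr z)) HzT -Z2 HzT subrr.
have Hnil' : forall m y, (K <= m)%N -> y \in lcs br m -> y = 0.
  by move=> m y Km; rewrite (lcs_up HK Km) memv0 => /eqP.
have Hpos : forall n, (0 < n)%N -> HL_vanishes br actl actr n.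
  case=> [//|n] _ /= f0 Hf0 Hc0.
  apply: (@main_ind F g M br actl actr z T (br_r Hlie) (br_jac Hlie z) aLr aRl
    HJl HJr HTlin HzT HTL HTR (fun k y => @lcs_br F g br Hlie k z y) n (n.+1 * K)%N f0 Hf0 Hc0).
  exact: (wP_top Hnil').
split => // Hsym; case=> [|n]; last exact: Hpos.
move=> f0 _ Hc0 x.
have E : forall y : {ffun 'I_0 -> g}, y = x by move=> y; apply/ffunP => [[i Hi]].
have := Hc0 [ffun _ => z].
rewrite /dL big1 ?add0r; last by case.
rewrite [X in _ + X]big1 ?addr0; last first.
  by move=> i _; rewrite big1 // => j; rewrite (ord1 i) (ord1 j).
rewrite expr1 scaleN1r (E (init_of _)) ffunE Hsym opprK => /Hinj.
by [].
Qed.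
End Main.

Local Close Scope ring_scope.

Theorem proposition2p8 (F : fieldType) (g M : vectType F)
    (br : g -> g -> g) (actl : g -> M -> M) (actr : M -> g -> M) :
  is_lie_bracket br -> lie_nilpotent br ->
  is_leibniz_bimodule br actl actr ->
  irreducible_bimodule actl actr -> nontrivial_bimodule actl actr ->
  (forall n : nat, (0 < n)%N -> HL_vanishes br actl actr n) /\
  (symmetric_bimodule actl actr -> forall n : nat, HL_vanishes br actl actr n).
Proof.
move=> Hlie Hnil Hbim Hirr Hnt.
exact: (final_sec Hlie Hnil Hbim Hirr Hnt).
Qed.
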